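(* For every contractor network and every node $i\in\mathcal V$, the limit $m_i:=\lim_{t\to\infty}m_i^t$ exists, and the vector $\mathbf m=(m_i)_i$ satisfies the fixed-point equation $$m_i=(1-\alpha_i)r_i+\alpha_i\sum_{j\in\delta_{\mathrm{in}}(i)}w_{ij}m_j\quad(i\in\mathcal V),\qquad\text{i.e. }\ \mathbf m=(\mathbf I-\mathbf A)\mathbf r+\mathbf A\mathbf W\mathbf m.$$ Moreover $\mathbf I-\mathbf A\mathbf W$ is invertible, so $\mathbf m$ is the unique solution of this equation, and $\mathbf m=(\mathbf I-\mathbf A\mathbf W)^{-1}(\mathbf I-\mathbf A)\mathbf r$.
   Context: A contractor network is a finite directed graph $G=(\mathcal V,\mathcal E)$ with $n=|\mathcal V|$ nodes, without multiple edges (self-loops and directed cycles are allowed), in which every node has at least one incident edge. For $i\in\mathcal V$ let $\delta_{\mathrm{in}}(i)=\{j:(j,i)\in\mathcal E\}$ and $\delta_{\mathrm{out}}(i)=\{k:(i,k)\in\mathcal E\}$. A node $i$ is a pure principal if $\delta_{\mathrm{in}}(i)=\emptyset$, a pure obligee if $\delta_{\mathrm{out}}(i)=\emptyset$, and an intermediary otherwise. Each edge $(j,i)\in\mathcal E$ carries a weight $w_{ij}>0$; set $w_{ij}=0$ if $(j,i)\notin\mathcal E$; for every node $i$ with $\delta_{\mathrm{in}}(i)\neq\emptyset$ we have $\sum_{j\in\delta_{\mathrm{in}}(i)}w_{ij}=1$. Let $\mathbf W=(w_{ij})_{i,j\in\mathcal V}$. Each node has a risk score $r_i$, with $r_i\in(0,1)$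 if $i$ is not a pure obligee and $r_i=0$ if $i$ is a pure obligee; $\mathbf r=(r_i)_i$. Each node has a propagation parameter $\alpha_i$, with $\alpha_i=0$ for pure principals, $\alpha_i=1$ for pure obligees, and $\alpha_i\in(0,1)$ for intermediaries; $\mathbf A=\mathrm{diag}(\alpha_i)_{i\in\mathcal V}$. The failure process $(\mathbf X^t)_{t\in\mathbb N}$, $\mathbf X^t\in\{0,1\}^n$, is defined by: the $X_i^0$ are independent with $X_i^0\sim\mathrm{Bernoulli}(r_i)$; for each $t\ge0$, conditionally on $(\mathbf X^0,\dots,\mathbf X^t)$, the $X_i^{t+1}$, $i\in\mathcal V$, are independent with $X_i^{t+1}\sim\mathrm{Bernoulli}\big((1-\alpha_i)r_i+\alpha_i\sum_{j\in\delta_{\mathrm{in}}(i)}w_{ij}X_j^t\big)$. Write $m_i^t=\mathbb E[X_i^t]$. *)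

(* Defs.v *)
From HB Require Import structures.
From mathcomp Require Import all_boot all_order all_algebra.
From mathcomp Require Import all_classical all_reals all_analysis.
Set Implicit Arguments. Unset Strict Implicit. Unset Printing Implicit Defensive.
Import Order.TTheory GRing.Theory Num.Theory.
Local Open Scope ring_scope.

Section Contractor.
Variables (R : realType) (n : nat).

(* Nodes are 'I_n.  [E j i] means (j,i) is an edge (j -> i).
   w i j is the weight w_{ij} of edge (j,i).  States are {ffun 'I_n -> bool}. *)

Definition has_in (E : rel 'I_n) (i : 'I_n) : bool := [exists j, E j i].
Definition has_out (E : rel 'I_n) (i : 'I_n) : bool := [exists k, E i k].

Definition contractor_network (E : rel 'I_n) (w : 'I_n -> 'I_n -> R)
  (r alpha : 'I_n -> R) : Prop :=
  (forall i, has_in E i || has_out E i) /\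
  (forall i j, E j i -> 0 < w i j) /\
  (forall i j, ~~ E j i -> w i j = 0) /\
  (forall i, has_in E i -> \sum_(j | E j i) w i j = 1) /\
  (forall i, has_out E i -> 0 < r i < 1) /\
  (forall i, ~~ has_out E i -> r i = 0) /\
  (forall i, ~~ has_in E i -> alpha i = 0) /\
  (forall i, ~~ has_out E i -> alpha i = 1) /\
  (forall i, has_in E i -> has_out E i -> 0 < alpha i < 1).

Definition bern (p : R) (b : bool) : R := if b then p else 1 - p.

(* success parameter of X_i^{t+1} given X^t = x *)
Definition trans_param (E : rel 'I_n) (w : 'I_n -> 'I_n -> R) (r alpha : 'I_n -> R)
  (x : {ffun 'I_n -> bool}) (i : 'I_n) : R :=
  (1 - alpha i) * r i + alpha i * \sum_(j | E j i) w i j * (x j)%:R.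

(* law (probability mass function) of X^t on {0,1}^n: X^0 has independent
   Bernoulli(r_i) coordinates; given the past, the X_i^{t+1} are independent
   Bernoulli(trans_param X^t i) (the conditional law only depends on X^t). *)
Fixpoint law (E : rel 'I_n) (w : 'I_n -> 'I_n -> R) (r alpha : 'I_n -> R)
  (t : nat) (x : {ffun 'I_n -> bool}) : R :=
  match t with
  | 0 => \prod_i bern (r i) (x i)
  | t'.+1 => \sum_(y : {ffun 'I_n -> bool})
               law E w r alpha t' y * \prod_i bern (trans_param E w r alpha y i) (x i)
  end.

Definition mean (E : rel 'I_n) (w : 'I_n -> 'I_n -> R) (r alpha : 'I_n -> R)
  (t : nat) (i : 'I_n) : R :=
  \sum_(x : {ffun 'I_n -> bool}) law E w r alpha t x * (x i)%:R.

Definition Wmx (w : 'I_n -> 'I_n -> R) : 'M[R]_n := \matrix_(i, j) w i j.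
Definition Amx (alpha : 'I_n -> R) : 'M[R]_n := diag_mx (\row_i alpha i).
Definition rvec (r : 'I_n -> R) : 'cV[R]_n := \col_i r i.

End Contractor.

(* Main.v *)
Require Import Defs.
From HB Require Import structures.
From mathcomp Require Import all_boot all_order all_algebra.
From mathcomp Require Import all_classical all_reals all_analysis.
Import Order.TTheory GRing.Theory Num.Theory.
Import numFieldNormedType.Exports.
Local Open Scope classical_set_scope.
Local Open Scope ring_scope.

Section S.
Variables (R : realType) (n : nat) (E : rel 'I_n)
  (w : 'I_n -> 'I_n -> R) (r alpha : 'I_n -> R).

Lemma sum_prod_bern (p : 'I_n -> R) :
  \sum_(x : {ffun 'I_n -> bool}) \prod_i bern (p i) (x i) = 1.
Proof.
rewrite -(bigA_distr_bigA (fun i b => bern (p i) b)) big1 // => i _.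
by rewrite big_bool /= /bern addrC subrK.
Qed.

Lemma marg (p : 'I_n -> R) i :
  \sum_(x : {ffun 'I_n -> bool}) (\prod_k bern (p k) (x k)) * (x i)%:R = p i.
Proof.
transitivity (\sum_(x : {ffun 'I_n -> bool})
   \prod_k (bern (p k) (x k) * (if k == i then (x k)%:R else 1))).
  apply: eq_bigr => x _; rewrite big_split /= -big_mkcond big_pred1_eq //.
rewrite -(bigA_distr_bigA (fun k (b : bool) => bern (p k) b * (if k == i then b%:R else 1))) (bigD1 i) //=.
rewrite [X in _ * X]big1 ?mulr1.
  by rewrite big_bool /= eqxx /bern mulr1 mulr0 addr0.
move=> k /negbTE ->; by rewrite big_bool /= !mulr1 /bern addrC subrK.
Qed.

Lemma law_sum1 t : \sum_x law E w r alpha t x = 1.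
Proof.
elim: t => [|t IH] /=; first exact: sum_prod_bern.
rewrite exchange_big /= -[RHS]IH; apply: eq_bigr => y _.
by rewrite -mulr_sumr (sum_prod_bern (trans_param E w r alpha y)) mulr1.
Qed.

Lemma mean0 i : mean E w r alpha 0 i = r i.
Proof. exact: marg. Qed.

Lemma mean_rec t i : mean E w r alpha t.+1 i =
  (1 - alpha i) * r i + alpha i * \sum_(j | E j i) w i j * mean E w r alpha t j.
Proof.
rewrite /mean /=.
transitivity (\sum_y law E w r alpha t y * trans_param E w r alpha y i).
  under eq_bigr do rewrite mulr_suml.
  rewrite exchange_big /=; apply: eq_bigr => y _.
  rewrite -(marg (trans_param E w r alpha y)) mulr_sumr.
  by apply: eq_bigr => x _; rewrite mulrA.
rewrite /trans_param.
rewrite (eq_bigr _ (fun y _ => mulrDr _ _ _)).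
rewrite big_split /= -mulr_suml law_sum1 mul1r; congr (_ + _).
rewrite (eq_bigr _ (fun y _ => mulrCA _ _ _)) -mulr_sumr; congr (_ * _).
rewrite (eq_bigr _ (fun y _ => mulr_sumr _ _ _ _)) exchange_big /=.
apply: eq_bigr => j _; rewrite mulr_sumr; apply: eq_bigr => y _.
by rewrite mulrCA mulrA.
Qed.
End S.

Section T.
Variables (R : realType) (n : nat) (E : rel 'I_n)
  (w : 'I_n -> 'I_n -> R) (r alpha : 'I_n -> R).
Hypothesis H : contractor_network E w r alpha.

Definition b i j := alpha i * w i j.
Definition step (x : 'I_n -> R) i := \sum_j b i j * x j.
Definition rho j := \sum_k b j k.
Definition s i := \sum_j b i j * rho j.
Definition q := \big[Num.max/0]_i s i.

Lemma alpha01 i : 0 <= alpha i <= 1.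
Proof.
case: H => inc [_ [_ [_ [_ [_ [a0 [a1 a01]]]]]]].
case hi: (has_in E i); case ho: (has_out E i).
- by case/andP: (a01 i hi ho) => /ltW -> /ltW ->.
- by rewrite a1 ?ho // ler01 lexx.
- by rewrite a0 ?hi // lexx ler01.
- by move: (inc i); rewrite hi ho.
Qed.

Lemma w_ge0 i j : 0 <= w i j.
Proof.
case: H => _ [wp [w0 _]].
case e: (E j i); first by apply/ltW/wp; rewrite e.
by rewrite w0 ?e.
Qed.

Lemma b_ge0 i j : 0 <= b i j.
Proof. by rewrite /b mulr_ge0 ?w_ge0 //; case/andP: (alpha01 i). Qed.

Lemma sumw i : \sum_j w i j = if has_in E i then 1 else 0.
Proof.
case: H => _ [_ [w0 [ws _]]].
rewrite (bigID (fun j => E j i)) /= [X in _ + X]big1 ?addr0; last first.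
  by move=> j /w0.
case hi: (has_in E i); first exact: ws.
apply: big1 => j ej; move/negbT/negP: hi; case; rewrite /has_in; apply/existsP; by exists j.
Qed.

Lemma rhoE j : rho j = alpha j * (if has_in E j then 1 else 0).
Proof. by rewrite /rho /b -mulr_sumr sumw. Qed.

Lemma rho_ge0 j : 0 <= rho j.
Proof. rewrite rhoE; case: ifP; rewrite ?mulr1 ?mulr0 //; by case/andP: (alpha01 j). Qed.

Lemma rho_le1 j : rho j <= 1.
Proof. rewrite rhoE; case: ifP; rewrite ?mulr1 ?mulr0 //; by case/andP: (alpha01 j). Qed.

Lemma rho_lt1 j : has_out E j -> rho j < 1.
Proof.
case: H => _ [_ [_ [_ [_ [_ [_ [_ a01]]]]]]] ho.
rewrite rhoE; case: ifP => hi; rewrite ?mulr1 ?mulr0 //.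
by case/andP: (a01 j hi ho).
Qed.

Lemma s_ge0 i : 0 <= s i.
Proof. by apply: sumr_ge0 => j _; rewrite mulr_ge0 ?b_ge0 ?rho_ge0. Qed.

Lemma s_le_rho i : s i <= rho i.
Proof.
by apply: ler_sum => j _; rewrite ler_piMr ?b_ge0 ?rho_le1.
Qed.

Lemma s_lt1 i : s i < 1.
Proof.
case ho: (has_out E i).
  by apply: (le_lt_trans (s_le_rho i)); apply: rho_lt1; rewrite ho.
case: H => inc [wp [w0 [ws [_ [_ [_ [a1 _]]]]]]].
have hi : has_in E i by move: (inc i); rewrite ho orbF.
move: (hi); rewrite /has_in => /existsP [j0 ej0].
have ho0 : has_out E j0 by rewrite /has_out; apply/existsP; exists i.
have -> : s i = \sum_j w i j * rho j.
  by apply: eq_bigr => j _; rewrite /b a1 ?ho // mul1r.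
have : \sum_j w i j * (1 - rho j) > 0.
  rewrite (bigD1 j0) //= ltr_pwDl //.
    by rewrite mulr_gt0 ?wp // subr_gt0 rho_lt1.
  by apply: sumr_ge0 => j _; rewrite mulr_ge0 ?w_ge0 // subr_ge0 rho_le1.
under eq_bigr do rewrite mulrBr mulr1.
by rewrite sumrB sumw hi subr_gt0.
Qed.

Lemma q_ge0 : 0 <= q.
Proof. exact: bigmax_ge_id. Qed.

Lemma s_le_q i : s i <= q.
Proof. exact: le_bigmax. Qed.

Lemma q_lt1 : q < 1.
Proof. by apply: bigmax_lt => // i _; apply: s_lt1. Qed.

Lemma step_mono x y i : (forall j, `|x j| <= y j) -> `|step x i| <= step y i.
Proof.
move=> hxy; apply: le_trans (ler_norm_sum _ _ _) _.
apply: ler_sum => j _; rewrite normrM ger0_norm ?b_ge0 //.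
by apply: ler_wpM2l; rewrite ?b_ge0.
Qed.

Lemma step_cst M i : step (fun=> M) i = M * rho i.
Proof. by rewrite /step /rho mulr_sumr; apply: eq_bigr => j _; rewrite mulrC. Qed.

Lemma step_rho M i : step (fun j => M * rho j) i = M * s i.
Proof. by rewrite /step /s mulr_sumr; apply: eq_bigr => j _; rewrite mulrCA. Qed.

Lemma step1 x M i : 0 <= M -> (forall j, `|x j| <= M) -> `|step x i| <= M.
Proof.
move=> M0 hx; apply: (le_trans (step_mono x (fun=> M) i hx)).
by rewrite step_cst ler_piMr ?rho_le1.
Qed.

Lemma step2 x M i : 0 <= M -> (forall j, `|x j| <= M) -> `|step (step x) i| <= M * q.
Proof.
move=> M0 hx.
have h : forall j, `|step x j| <= M * rho j.
  by move=> j; rewrite -step_cst; apply: step_mono.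
apply: (le_trans (step_mono (step x) (fun j => M * rho j) i h)).
by rewrite step_rho ler_wpM2l ?s_le_q.
Qed.

Lemma stepB x y i : step x i - step y i = step (fun j => x j - y j) i.
Proof. by rewrite /step -sumrB; apply: eq_bigr => j _; rewrite mulrBr. Qed.

Lemma kernel0 x : (forall i, x i = step x i) -> forall i, x i = 0.
Proof.
move=> hx i; set M := \big[Num.max/0]_j `|x j|.
have M0 : 0 <= M by exact: bigmax_ge_id.
have hM : forall j, `|x j| <= M by move=> j; exact: le_bigmax.
have : M <= M * q.
  apply: bigmax_le => [|j _]; first by rewrite mulr_ge0 ?q_ge0.
  have ex : step x = x by apply/funext=> k; rewrite -hx.
  by rewrite hx -{1}ex; apply: step2.
move=> hMq.
have : M * (1 - q) <= 0 by rewrite mulrBr mulr1 subr_le0.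
rewrite pmulr_lle0 ?subr_gt0 ?q_lt1 // => M00.
by apply/normr0_eq0/le_anti; rewrite normr_ge0 (le_trans (hM i)).
Qed.

Lemma AWE (X : 'cV[R]_n) i :
  (Amx alpha *m Wmx w *m X) i ord0 = step (fun j => X j ord0) i.
Proof.
rewrite -mulmxA mul_diag_mx !mxE /step mulr_sumr.
by apply: eq_bigr => j _; rewrite !mxE /b mulrA.
Qed.

Lemma cE i : ((1%:M - Amx alpha) *m rvec r) i ord0 = (1 - alpha i) * r i.
Proof.
rewrite mulmxBl mul1mx mul_diag_mx !mxE.
by rewrite mulrBl mul1r.
Qed.

Lemma sumE (f : 'I_n -> R) i :
  alpha i * \sum_(j | E j i) w i j * f j = step f i.
Proof.
case: H => _ [_ [w0 _]].
rewrite /step mulr_sumr big_mkcond /=; apply: eq_bigr => j _.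
case: ifP => e; first by rewrite /b mulrA.
by rewrite /b w0 ?e // mulr0 mul0r.
Qed.

Lemma unitM : (1%:M - Amx alpha *m Wmx w) \in unitmx.
Proof.
rewrite unitmxE unitfE -det_tr; apply/negP => /det0P [v nz0 vA].
have h : (1%:M - Amx alpha *m Wmx w) *m v^T = 0.
  by rewrite -[LHS]trmxK trmx_mul trmxK vA trmx0.
have h2 : forall i, v^T i ord0 = step (fun j => v^T j ord0) i.
  move: h; rewrite mulmxBl mul1mx => /eqP; rewrite subr_eq0 => /eqP h i.
  by rewrite -AWE -h.
move/negP: nz0; apply; apply/eqP; rewrite -[v]trmxK; apply/matrixP => i j.
rewrite ord1 mxE [RHS]mxE; exact: (kernel0 (fun k => v^T k ord0) h2 j).
Qed.

Lemma main_sec :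
  exists m : 'cV[R]_n,
    (forall i : 'I_n, (fun t => mean E w r alpha t i) @ \oo --> m i ord0) /\
    (forall i : 'I_n,
        m i ord0 = (1 - alpha i) * r i + alpha i * \sum_(j | E j i) w i j * m j ord0) /\
    m = (1%:M - Amx alpha) *m rvec r + Amx alpha *m Wmx w *m m /\
    (1%:M - Amx alpha *m Wmx w) \in unitmx /\
    (forall x : 'cV[R]_n,
        x = (1%:M - Amx alpha) *m rvec r + Amx alpha *m Wmx w *m x -> x = m) /\
    m = invmx (1%:M - Amx alpha *m Wmx w) *m ((1%:M - Amx alpha) *m rvec r).
Proof.
have uM := unitM.
set M := 1%:M - Amx alpha *m Wmx w.
set c := (1%:M - Amx alpha) *m rvec r.
set m := invmx M *m c.
exists m.
have Mm : M *m m = c by rewrite /m mulKVmx.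
have hfix : m = c + Amx alpha *m Wmx w *m m.
  by move: Mm; rewrite /M mulmxBl mul1mx => <-; rewrite subrK.
have fixc : forall i, m i ord0 = (1 - alpha i) * r i + step (fun j => m j ord0) i.
  by move=> i; rewrite {1}hfix mxE cE AWE.
split; last first.
  split; first by move=> i; rewrite sumE; exact: fixc.
  split; first exact: hfix.
  split; first exact: uM.
  split => // x hx.
  have : M *m x = c by rewrite /M mulmxBl mul1mx {1}hx addrK.
  by rewrite /m => <-; rewrite mulKmx.
move=> i.
pose e t j := mean E w r alpha t j - m j ord0.
have erec : forall t j, e t.+1 j = step (e t) j.
  by move=> t j; rewrite /e mean_rec fixc sumE opprD addrACA subrr add0r stepB.
set M0 := \big[Num.max/0]_j `|e 0%N j|.
have M00 : 0 <= M0 by exact: bigmax_ge_id.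
have bnd : forall t, (forall j, `|e t j| <= q ^+ t./2 * M0) /\
                     (forall j, `|e t.+1 j| <= q ^+ t.+1./2 * M0).
  elim => [|t [IH0 IH1]].
    split => j /=; rewrite expr0 mul1r; first exact: le_bigmax.
    by rewrite erec; apply: step1 => // k; exact: le_bigmax.
  split; first exact: IH1.
  move=> j; have ef : e t.+1 = step (e t) by apply/funext => k; exact: erec.
  rewrite erec ef /= exprSr mulrAC; apply: step2 => //.
  by rewrite mulr_ge0 ?exprn_ge0 ?q_ge0.
apply/cvgrPdist_le => eps eps0.
have hq : `|q| < 1 by rewrite ger0_norm ?q_ge0 ?q_lt1.
have M01 : 0 < M0 + 1 by rewrite ltr_wpDl.
set eps' := eps / (M0 + 1).
have eps'0 : 0 < eps' by rewrite divr_gt0.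
case: ((cvgrPdist_le _ _).1 (cvg_expr hq) eps' eps'0) => N _ HN.
exists N.*2 => // t /= Ht.
have hk : (N <= t./2)%N by rewrite -(doubleK N) half_leq.
have := HN t./2 hk; rewrite sub0r normrN ger0_norm ?exprn_ge0 ?q_ge0 // => qk.
rewrite distrC; apply: le_trans ((bnd t).1 i) _.
apply: le_trans (ler_wpM2r M00 qk) _.
rewrite /eps' mulrAC ler_pdivrMr // ler_wpM2l ?ltW //.
by rewrite ltrDl ltr01.
Qed.
End T.

Theorem mainTheorem4 (R : realType) (n : nat) (E : rel 'I_n)
  (w : 'I_n -> 'I_n -> R) (r alpha : 'I_n -> R) :
  contractor_network E w r alpha ->
  exists m : 'cV[R]_n,
    (forall i : 'I_n, (fun t => mean E w r alpha t i) @ \oo --> m i ord0) /\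
    (forall i : 'I_n,
        m i ord0 = (1 - alpha i) * r i + alpha i * \sum_(j | E j i) w i j * m j ord0) /\
    m = (1%:M - Amx alpha) *m rvec r + Amx alpha *m Wmx w *m m /\
    (1%:M - Amx alpha *m Wmx w) \in unitmx /\
    (forall x : 'cV[R]_n,
        x = (1%:M - Amx alpha) *m rvec r + Amx alpha *m Wmx w *m x -> x = m) /\
    m = invmx (1%:M - Amx alpha *m Wmx w) *m ((1%:M - Amx alpha) *m rvec r).
Proof. move=> H; exact: (@main_sec R n E w r alpha H). Qed.
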